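(* Let $\mu$ be a density on $[q]^n$ with $H_\infty(\mu)\ge(n-t)\log q$. Then there exists a partition $[q]^n=\left(\bigcup_{i\in[N]}S_i\right)\cup S_{error}$ such that for each $i\in[N]$, the density $\mu$ conditioned on $S_i$ is a $10t$-CBD distribution, and $\mu(S_{error})\le q^{-t}$.
   Context: Logarithms base 2. A density on $[q]^n$ is $\mu\ge0$ with uniform average $1$; $X\sim\mu$ means $\Pr[X=x]=\mu(x)q^{-n}$; $H_\infty(\mu)=\min_x\log(q^n/\mu(x))$; for a random variable $Z$, $H_\infty(Z)=\min_z\log(1/\Pr[Z=z])$. $\mu(S)=\Pr_{X\sim\mu}[X\in S]$, and $\mu$ conditioned on $S$ is the distribution of $X\sim\mu$ conditioned on $X\in S$. $X_I$ is the projection onto coordinates $I\subseteq[n]$. A random variable $X$ on $[q]^n$ is $d$-CBD if there is $I\subseteq[n]$, $|I|\le d$, with $X_I$ constant and $H_\infty(X_J)\ge0.8\log q\cdot|J|$ for every $J\subseteq[n]\setminus I$. *)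

(* Defs.v *)
From HB Require Import structures.
From mathcomp Require Import all_boot all_order all_algebra.
From mathcomp Require Import reals exp.
Set Implicit Arguments. Unset Strict Implicit. Unset Printing Implicit Defensive.
Import Order.TTheory GRing.Theory Num.Theory.
Local Open Scope ring_scope.

Definition cube (n q : nat) := {ffun 'I_n -> 'I_q}.

Section Defs.
Context {R : realType} {n q : nat}.

Definition log2 (x : R) : R := ln x / ln 2.

(* mu is a density: nonnegative, uniform average 1 *)
Definition is_density (mu : cube n q -> R) : Prop :=
  (forall x, 0 <= mu x) /\ \sum_(x : cube n q) mu x = (q ^ n)%:R.

(* H_oo(mu) >= h, where H_oo(mu) = min_x log(q^n / mu(x))
   (points with mu(x) = 0 contribute +oo to the minimum) *)
Definition Hinf_density_ge (mu : cube n q -> R) (h : R) : Prop :=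
  forall x, 0 < mu x -> h <= log2 ((q ^ n)%:R / mu x).

(* mu(S) = Pr_{X ~ mu}[X \in S] *)
Definition dmass (mu : cube n q -> R) (S : {set cube n q}) : R :=
  \sum_(x in S) mu x / (q ^ n)%:R.

Definition cond (mu : cube n q -> R) (S : {set cube n q}) : cube n q -> R :=
  fun x => if x \in S then mu x / (\sum_(y in S) mu y) else 0.

Definition proj_prob (p : cube n q -> R) (J : {set 'I_n}) (y : cube n q) : R :=
  \sum_(x : cube n q | [forall j in J, x j == y j]) p x.

(* H_oo(X_J) >= h, where H_oo(Z) = min_z log(1/Pr[Z = z]) over values z
   with positive probability *)
Definition Hinf_proj_ge (p : cube n q -> R) (J : {set 'I_n}) (h : R) : Prop :=
  forall y, 0 < proj_prob p J y -> h <= log2 (1 / proj_prob p J y).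

Definition CBD (p : cube n q -> R) (d : R) : Prop :=
  exists I : {set 'I_n},
    (#|I|%:R <= d) /\
    (exists c : cube n q, forall x, 0 < p x -> forall i, i \in I -> x i = c i) /\
    (forall J : {set 'I_n}, [disjoint J & I] ->
       Hinf_proj_ge p J ((4 / 5) * log2 q%:R * #|J|%:R)).

End Defs.

(* Main.v *)
Require Import Defs.
From HB Require Import structures.
From mathcomp Require Import all_boot all_order all_algebra.
From mathcomp Require Import reals exp.
From mathcomp Require Import ring lra zify.
Import Order.TTheory GRing.Theory Num.Theory.
Local Open Scope ring_scope.

Section Pf.
Variables (R : realType) (n q : nat) (t : R) (mu : cube n q -> R).
Hypothesis hq : (1 < q)%N.
Hypothesis mu0 : forall x, 0 <= mu x.
Local Notation a := (q%:R : R).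
Hypothesis mub : forall x, mu x <= a `^ t.

Definition W (S : {set cube n q}) := \sum_(x in S) mu x.
Definition agree (I : {set 'I_n}) (al : cube n q) : {set cube n q} :=
  [set x : cube n q | [forall i in I, x i == al i]].

Lemma a_gt1 : 1 < a. Proof. by rewrite ltr1n. Qed.
Lemma a_gt0 : 0 < a. Proof. by rewrite ltr0n ltnW. Qed.

Lemma powR_ltE x y : (a `^ x < a `^ y) = (x < y).
Proof.
have ha := a_gt0.
rewrite -(ltr_ln (powR_gt0 x ha) (powR_gt0 y ha)) !ln_powR ltr_pM2r //.
exact: ln_gt0 a_gt1.
Qed.

Lemma natXE k : (q ^ k)%:R = a `^ k%:R :> R.
Proof. by rewrite natrX powR_mulrn // ltW // a_gt0. Qed.

Lemma powRDa x y : a `^ (x + y) = a `^ x * a `^ y.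
Proof. by rewrite powRD // (gt_eqF a_gt0) implybT. Qed.

Lemma W_ge0 S : 0 <= W S.
Proof. by apply: sumr_ge0 => x _. Qed.

Lemma W_sub (A B : {set cube n q}) : A \subset B -> W A <= W B.
Proof.
move=> AB; rewrite /W [X in _ <= X](@big_setID _ _ _ _ B A) /= (setIidPr AB) lerDl.
by apply: sumr_ge0 => x _.
Qed.

Lemma dmassE S : dmass mu S = W S / (q ^ n)%:R.
Proof. by rewrite /dmass /W mulr_suml. Qed.

Lemma c0 : 'I_q. Proof. exact: (Ordinal (ltnW hq)). Qed.

Lemma card_agree I al : (#|agree I al| <= q ^ (n - #|I|))%N.
Proof.
pose g (x : cube n q) : cube n q := [ffun i => if i \in I then c0 else x i].
have inj : {in agree I al &, injective g}.
  move=> x y; rewrite !inE => /forallP hx /forallP hy e; apply/ffunP => i.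
  case: (boolP (i \in I)) => iI.
    by move/implyP: (hx i) => /(_ iI)/eqP ->; move/implyP: (hy i) => /(_ iI)/eqP ->.
  by have := congr1 (fun f : cube n q => f i) e; rewrite /g !ffunE (negbTE iI).
rewrite -(card_in_imset inj).
apply: leq_trans (_ : #|pffun_on c0 (~: I) predT| <= _)%N.
  apply: subset_leq_card; apply/subsetP => f /imsetP [x _ ->].
  apply/pffun_onP; split => //.
  apply/subsetP => i; rewrite !inE /g ffunE; case: (i \in I) => //=.
  by rewrite eqxx.
rewrite card_pffun_on card_ord.
have := cardsC I; rewrite card_ord => e.
have -> : (n - #|I| = #|~: I|)%N by lia.
by [].
Qed.

Lemma W_agree_le T I al : W (T :&: agree I al) <= (q ^ (n - #|I|))%:R * a `^ t.
Proof.
apply: le_trans (@W_sub _ _ (subsetIr T _)) _.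
apply: le_trans (_ : \sum_(x in agree I al) a `^ t <= _).
  by apply: ler_sum => x _; apply: mub.
rewrite sumr_const -[_ *+ _]mulr_natl ler_wpM2r ?powR_ge0 // ler_nat.
exact: card_agree.
Qed.


Lemma piece T : a `^ (-t) < dmass mu T ->
  exists S : {set cube n q}, [/\ S \subset T, 0 < dmass mu S & CBD (cond mu S) (10 * t)].
Proof.
move=> hT.
have qn0 : 0 < (q ^ n)%:R :> R by rewrite ltr0n expn_gt0 ltnW.
have WT : a `^ (-t) * (q ^ n)%:R < W T by rewrite -ltr_pdivlMr // -dmassE.
pose al0 : cube n q := [ffun _ => c0].
pose viol (p : {set 'I_n} * cube n q) :=
  a `^ (- (4/5) * #|p.1|%:R) * W T <= W (T :&: agree p.1 p.2).
have v0 : viol (set0, al0).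
  rewrite /viol /= cards0 mulr0 powRr0 mul1r.
  have -> : agree set0 al0 = setT.
    by apply/setP => x; rewrite !inE; apply/forallP => i; rewrite inE.
  by rewrite setIT.
case: (@arg_maxnP _ (set0, al0) viol (fun p : {set 'I_n} * cube n q => #|p.1|) v0) => -[I al] /= vI maxI.
set S := T :&: agree I al.
have WTpos : 0 < W T.
  by apply: le_lt_trans WT; rewrite mulr_ge0 ?powR_ge0 // ltW.
have WS : a `^ (- (4/5) * #|I|%:R) * W T <= W S := vI.
have WSpos : 0 < W S := lt_le_trans (mulr_gt0 (powR_gt0 _ a_gt0) WTpos) WS.
exists S; split.
- exact: subsetIl.
- by rewrite dmassE divr_gt0.
- exists I; split; [|split].
  + have h1 := W_agree_le T I al.
    have h2 : a `^ (- (4/5) * #|I|%:R) * (a `^ (-t) * (q ^ n)%:R) < W S.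
      have := WT; rewrite -(ltr_pM2l (powR_gt0 (- (4/5) * #|I|%:R) a_gt0)) => h.
      exact: lt_le_trans h WS.
    have h3 := lt_le_trans h2 h1.
    move: h3; rewrite !natXE natrB; last by have := max_card (mem I); rewrite card_ord.
    rewrite -!powRDa powR_ltE => h.
    lra.
  + exists al => x; rewrite /cond; case: ifP => [xS _ i iI | _]; last by rewrite ltxx.
    by move: xS; rewrite /S !inE => /andP[_ /forallP /(_ i)]; rewrite iI => /eqP.
  + move=> J dJ y Py.
    have PE : proj_prob (cond mu S) J y = W (S :&: agree J y) / W S.
      rewrite /proj_prob /cond /W -big_mkcondr mulr_suml; apply: eq_bigl => x.
      by rewrite [in RHS]in_setI andbC [x \in agree J y]inE.
    have Ple : proj_prob (cond mu S) J y <= a `^ (- (4/5) * #|J|%:R).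
      rewrite PE ler_pdivrMr //.
      case: (boolP (J == set0)) => [/eqP J0 | Jn0].
        by rewrite J0 cards0 mulr0 powRr0 mul1r; apply: W_sub; exact: subsetIl.
      pose be : cube n q := [ffun i => if i \in I then al i else y i].
      have E : S :&: agree J y = T :&: agree (I :|: J) be.
        apply/setP => x; rewrite /S !inE -andbA; congr (_ && _).
        apply/andP/forallP => [[/forallP h1 /forallP h2] i | h].
          rewrite inE /be ffunE; case: (boolP (i \in I)) => iI /=.
            by have := h1 i; rewrite iI.
          by apply/implyP => iJ; have := h2 i; rewrite iJ.
        split; apply/forallP => i; apply/implyP => hi; have := h i;
          rewrite !inE hi ?orbT /= /be ffunE.
          by rewrite hi.
        by rewrite (disjointFr dJ hi).
      have cardIJ : #|I :|: J| = (#|I| + #|J|)%N.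
        rewrite cardsU (@disjoint_setI0 _ I J) ?cards0 ?subn0 //.
        by rewrite disjoint_sym.
      have nv : ~~ viol (I :|: J, be).
        apply/negP => /maxI /=; rewrite cardIJ.
        have : (0 < #|J|)%N by rewrite card_gt0.
        move=> h1; rewrite -[X in (_ <= X)%N]addn0 leq_add2l leqn0 => /eqP J0.
        by rewrite J0 in h1.
      move: nv; rewrite /viol /= -ltNge => nv.
      rewrite E; apply: ltW (lt_le_trans nv _).
      rewrite cardIJ natrD mulrDr powRDa [X in X * W T]mulrC -mulrA.
      by rewrite ler_wpM2l ?powR_ge0.
    have l2 : 0 < ln (2 : R) by apply: ln_gt0; rewrite ltr1n.
    rewrite /log2.
    have -> : 4 / 5 * (ln a / ln 2) * #|J|%:R = (4 / 5 * #|J|%:R * ln a) / ln (2 : R).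
      by ring.
    rewrite ler_pM2r ?invr_gt0 // -ln_powR.
    rewrite ler_ln ?posrE ?powR_gt0 ?a_gt0 ?divr_gt0 //.
    rewrite ler_pdivlMr //.
    apply: le_trans (ler_wpM2l (powR_ge0 _ _) Ple) _.
    by rewrite mulNr powRN mulfV // gt_eqF // powR_gt0 // a_gt0.
Qed.

Lemma build k : forall T : {set cube n q}, (#|T| <= k)%N ->
  exists (N : nat) (S : 'I_N -> {set cube n q}) (Serr : {set cube n q}),
    [/\ (forall i j : 'I_N, i != j -> [disjoint S i & S j]),
        (forall i : 'I_N, [disjoint S i & Serr]),
        (\bigcup_(i < N) S i) :|: Serr = T,
        (forall i : 'I_N, 0 < dmass mu (S i) /\ CBD (cond mu (S i)) (10 * t))
      & dmass mu Serr <= a `^ (- t)].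
Proof.
have stop T : dmass mu T <= a `^ (- t) -> exists (N : nat) (S : 'I_N -> {set cube n q}) (Serr : {set cube n q}),
    [/\ (forall i j : 'I_N, i != j -> [disjoint S i & S j]),
        (forall i : 'I_N, [disjoint S i & Serr]),
        (\bigcup_(i < N) S i) :|: Serr = T,
        (forall i : 'I_N, 0 < dmass mu (S i) /\ CBD (cond mu (S i)) (10 * t))
      & dmass mu Serr <= a `^ (- t)].
  move=> le; exists 0%N, (fun _ => set0), T; split => //; try by case.
  by rewrite big_ord0 set0U.
elim: k => [|k IH] T hT; (have [le|gt] := leP (dmass mu T) (a `^ (- t)));
  try exact: stop.
- exfalso; move: hT; rewrite leqn0 => /eqP /cards0_eq T0.
  move: gt; rewrite T0 dmassE /W big_set0 mul0r => h.
  by have := le_lt_trans (powR_ge0 _ _) h; rewrite ltxx.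
- have [S0 [S0T S0p S0c]] := piece T gt.
  have S0n : S0 != set0.
    by apply: contraTneq S0p => ->; rewrite dmassE /W big_set0 mul0r ltxx.
  have hT' : (#|T :\: S0| <= k)%N.
    rewrite cardsD (setIidPr S0T).
    have : (0 < #|S0|)%N by rewrite card_gt0.
    have : (#|S0| <= #|T|)%N by apply: subset_leq_card.
    move: hT; lia.
  have [N [Sr [Se [h1 h2 h3 h4 h5]]]] := IH _ hT'.
  have SrT : forall j, Sr j \subset T :\: S0.
    by move=> j; rewrite -h3; apply: subset_trans (bigcup_sup j isT) (subsetUl _ _).
  have SeT : Se \subset T :\: S0 by rewrite -h3 subsetUr.
  have dS0 : [disjoint T :\: S0 & S0].
    by rewrite disjoints_subset setDE subsetIr.
  exists N.+1, (fun i => if unlift ord0 i is Some j then Sr j else S0), Se; split => //.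
  + move=> i j; case: (unliftP ord0 i) => [i' ->|->]; case: (unliftP ord0 j) => [j' ->|->] //.
    * by move=> ne; apply: h1; apply: contraNneq ne => ->.
    * by move=> _; apply: disjointWl (SrT i') dS0.
    * by move=> _; rewrite disjoint_sym; apply: disjointWl (SrT j') dS0.
  + move=> i; case: (unliftP ord0 i) => [i' _|_]; first exact: h2.
    by rewrite disjoint_sym; apply: disjointWl SeT dS0.
  + rewrite big_ord_recl unlift_none.
    under eq_bigr => i _ do rewrite liftK.
    rewrite -setUA h3; apply/setP => x; rewrite !inE.
    case: (boolP (x \in S0)) => [xS|_]; last by [].
    by rewrite (subsetP S0T x xS).
  + move=> i; case: (unliftP ord0 i) => [i' _|_]; first exact: h4.
    exact: (conj S0p S0c).
Qed.

End Pf.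

Theorem lemma6p1 (R : realType) (n q : nat) (t : R) (mu : cube n q -> R) :
  (1 < q)%N ->
  is_density mu ->
  Hinf_density_ge mu ((n%:R - t) * log2 q%:R) ->
  exists (N : nat) (S : 'I_N -> {set cube n q}) (Serr : {set cube n q}),
    [/\ (forall i j : 'I_N, i != j -> [disjoint S i & S j]),
        (forall i : 'I_N, [disjoint S i & Serr]),
        (\bigcup_(i < N) S i) :|: Serr = [set: cube n q],
        (forall i : 'I_N, 0 < dmass mu (S i) /\ CBD (cond mu (S i)) (10 * t))
      & dmass mu Serr <= q%:R `^ (- t)].
Proof.
move=> hq [mu0 _] hH.
have q0 : 0 < (q%:R : R) by rewrite ltr0n ltnW.
have mub : forall x, mu x <= (q%:R : R) `^ t.
  move=> x; have [mx0|] := ltP 0 (mu x); last first.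
    by move=> h; apply: le_trans h (powR_ge0 _ _).
  have := hH x mx0; rewrite /log2.
  have l2 : 0 < ln (2 : R) by apply: ln_gt0; rewrite ltr1n.
  rewrite mulrA ler_pM2r ?invr_gt0 //.
  have qn0 : 0 < (q ^ n)%:R :> R by rewrite ltr0n expn_gt0 ltnW.
  rewrite (ln_div qn0 mx0) natrX (lnXn _ q0) -mulr_natr => h.
  have h' : ln (mu x) <= ln ((q%:R : R) `^ t) by rewrite ln_powR; lra.
  by move: h'; rewrite (ler_ln mx0 (powR_gt0 _ q0)).
exact: (@build R n q t mu hq mu0 mub #|[set: cube n q]| [set: cube n q] (leqnn _)).
Qed.
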